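(* Let $k\ge1$ and let $S_1,\dots,S_k\in\mathcal{B}_A(\mathcal{H})$. Then for every positive integer $n$, $$\omega_A^{4n}\Big(\sum_{i=1}^kS_i\Big)\le\frac{k^{4n-1}}{4}\left[\Big\|\sum_{i=1}^k\Big(\big(S_i^{\sharp_A}S_i\big)^{2n}+\big(S_iS_i^{\sharp_A}\big)^{2n}\Big)\Big\|_A+2\sum_{i=1}^k\omega_A\Big(\big(S_i^{\sharp_A}S_i\big)^{n}\big(S_iS_i^{\sharp_A}\big)^{n}\Big)\right].$$
   Context: $\mathcal{H}$ is a complex Hilbert space with inner product $\langle\cdot,\cdot\rangle$, and $A$ is a fixed nonzero positive bounded operator on $\mathcal{H}$. Set $\langle x,y\rangle_A=\langle Ax,y\rangle$ and $\|x\|_A=\|A^{1/2}x\|$. $\mathcal{B}_A(\mathcal{H})$ is the set of bounded operators $T$ for which there exists a bounded $S$ with $\langle Tx,y\rangle_A=\langle x,Sy\rangle_A$ for all $x,y$ (equivalently $\mathcal{R}(T^*A)\subseteq\mathcal{R}(A)$). For $T\in\mathcal{B}_A(\mathcal{H})$, $T^{\sharp_A}=A^\dagger T^*A$ ($A^\dagger$ the Moore–Penrose inverse) is the reduced solution of $AX=T^*A$. For an operator $T$ with $\|Tx\|_A\le\lambda\|x\|_A$ for some $\lambda>0$ and all $x$, $\|T\|_A=\sup\{\|Tx\|_A: \|x\|_A=1\}$, and $\omega_A(T)=\sup\{|\langle Tx,x\rangle_A|:\|x\|_A=1\}$. *)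

(* Defs.v *)
From HB Require Import structures.
From mathcomp Require Import all_boot all_order all_algebra.
From mathcomp Require Import complex.
From mathcomp Require Import all_classical all_reals.
Set Implicit Arguments. Unset Strict Implicit. Unset Printing Implicit Defensive.
Import Order.TTheory GRing.Theory Num.Theory.
Local Open Scope ring_scope.
Local Open Scope classical_set_scope.

Section HilbertDefs.
Variable R : realType.
Variable H : lmodType R[i].
Variable ip : H -> H -> R[i].

Definition inner_product_axioms : Prop :=
  [/\ forall (a : R[i]) (x y z : H), ip (a *: x + y) z = a * ip x z + ip y z,
      forall x y : H, ip y x = conjc (ip x y),
      forall x : H, 0 <= ip x x
    & forall x : H, ip x x = 0 -> x = 0].

Definition hnorm (x : H) : R := Num.sqrt (complex.Re (ip x x)).

Definition hcomplete : Prop :=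
  forall u : nat -> H,
    (forall e : R, 0 < e -> exists N : nat, forall m p : nat,
        (N <= m)%N -> (N <= p)%N -> hnorm (u m - u p) < e) ->
    exists l : H, forall e : R, 0 < e -> exists N : nat, forall m : nat,
        (N <= m)%N -> hnorm (u m - l) < e.

Definition bounded_op (T : H -> H) : Prop :=
  linear T /\ exists c : R, forall x : H, hnorm (T x) <= c * hnorm x.

Definition positive_op (A : H -> H) : Prop :=
  bounded_op A /\ forall x : H, 0 <= ip (A x) x.

Variable A : H -> H.

Definition ipA (x y : H) : R[i] := ip (A x) y.
Definition normA (x : H) : R := Num.sqrt (complex.Re (ipA x x)).

Definition in_BA (T : H -> H) : Prop :=
  bounded_op T /\
  exists S : H -> H, bounded_op S /\ forall x y : H, ipA (T x) y = ipA x (S y).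

(* X = T^{#_A} = A^dagger T^* A, characterized as the reduced solution of
   A X = T^* A : X bounded, <A X x, y> = <A x, T y> for all x y
   (i.e. A X = T^* A), and R(X) contained in closure R(A) = N(A)^perp. *)
Definition is_sharpA (T X : H -> H) : Prop :=
  [/\ bounded_op X,
      forall x y : H, ip (A (X x)) y = ip (A x) (T y)
    & forall x z : H, A z = 0 -> ip (X x) z = 0].

Definition cabs (z : R[i]) : R := complex.Re `|z|.

Definition opnormA (T : H -> H) : R :=
  sup [set normA (T x) | x in [set x : H | normA x = 1]].

Definition omegaA (T : H -> H) : R :=
  sup [set cabs (ipA (T x) x) | x in [set x : H | normA x = 1]].

End HilbertDefs.

(* Main.v *)
Require Import Defs.
From HB Require Import structures.
From mathcomp Require Import all_boot all_order all_algebra.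
From mathcomp Require Import complex.
From mathcomp Require Import all_classical all_reals.
Import Order.TTheory GRing.Theory Num.Theory.
Local Open Scope ring_scope.

From mathcomp Require Import lra ring zify.
Local Open Scope complex_scope.

Section Cplx.
Context {R : realType}.
Implicit Types z w : R[i].

Lemma cabsE z : cabs z = Num.sqrt (complex.Re z ^+ 2 + complex.Im z ^+ 2).
Proof. by rewrite /cabs normc_def. Qed.

Lemma cabs_ge0 z : 0 <= cabs z.
Proof. by rewrite cabsE sqrtr_ge0. Qed.

Lemma cabs_sqr z : cabs z ^+ 2 = complex.Re z ^+ 2 + complex.Im z ^+ 2.
Proof. by rewrite cabsE sqr_sqrtr // addr_ge0 // sqr_ge0. Qed.

Lemma Re_le_cabs z : `|complex.Re z| <= cabs z.
Proof.
rewrite -(@ler_pXn2r _ 2) ?nnegrE ?cabs_ge0 // cabs_sqr real_normK ?num_real //.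
by rewrite lerDl sqr_ge0.
Qed.

Lemma Re_le_cabs' z : complex.Re z <= cabs z.
Proof. exact: le_trans (ler_norm _) (Re_le_cabs z). Qed.

Lemma cabsM z w : cabs (z * w) = cabs z * cabs w.
Proof.
apply/eqP; rewrite -(@eqrXn2 _ 2) // ?mulr_ge0 ?cabs_ge0 //.
rewrite exprMn !cabs_sqr; case: z => a b; case: w => c d /=.
by apply/eqP; ring.
Qed.

Lemma cabsJ z : cabs (conjc z) = cabs z.
Proof. by rewrite !cabsE; case: z => a b /=; rewrite sqrrN. Qed.

Lemma cabsD z w : cabs (z + w) <= cabs z + cabs w.
Proof.
have := ler_normD z w; rewrite /cabs.
rewrite !normc_def -rmorphD /= lecR //.
Qed.

Lemma cabs_sum (I : Type) (r : seq I) (F : I -> R[i]) :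
  cabs (\sum_(i <- r) F i) <= \sum_(i <- r) cabs (F i).
Proof.
elim/big_rec2: _ => [|i y z _ Hz]; first by rewrite cabsE /= expr0n /= addr0 sqrtr0.
exact: le_trans (cabsD _ _) (lerD (lexx _) Hz).
Qed.

Lemma ge0_real z : 0 <= z -> z = (complex.Re z)%:C /\ 0 <= complex.Re z.
Proof.
rewrite lecE /= => /andP[/eqP H0 H1]; split => //.
by case: z H0 H1 => a b /= ->.
Qed.

Lemma cabs_real (r : R) : cabs r%:C = `|r|.
Proof. by rewrite cabsE /= expr0n /= addr0 sqrtr_sqr. Qed.

End Cplx.
Lemma Re_sqr_le {R : realType} (z : R[i]) : complex.Re z ^+ 2 <= cabs z ^+ 2.
Proof. by rewrite cabs_sqr lerDl sqr_ge0. Qed.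


Section Q.
Context {R : realType}.
Lemma quad_disc (X Y n : R) : 0 <= X -> 0 <= Y -> 0 <= n ->
  (forall t, 0 <= X - 2 * t * n + t ^+ 2 * n * Y) -> n <= X * Y.
Proof.
move=> X0 Y0 n0 Ht.
have [->|nP] := eqVneq n 0; first by rewrite mulr_ge0.
have {}nP : 0 < n by rewrite lt0r nP.
have [Y0'|YP] := eqVneq Y 0.
  have := Ht ((X + 1) / (2 * n)); rewrite Y0' mulr0 addr0.
  have -> : 2 * ((X + 1) / (2 * n)) * n = X + 1.
    by field; rewrite lt0r_neq0.
  lra.
have {}YP : 0 < Y by rewrite lt0r YP.
have := Ht (Y^-1).
have -> : X - 2 * Y^-1 * n + Y^-1 ^+ 2 * n * Y = (X * Y - n) / Y.
  by field; rewrite lt0r_neq0.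
by rewrite pmulr_lge0 ?invr_gt0 // subr_ge0.
Qed.
End Q.


Definition nf {R : realType} {H : lmodType R[i]} (f : H -> H -> R[i]) x := complex.Re (f x x).
Definition Nf {R : realType} {H : lmodType R[i]} (f : H -> H -> R[i]) x := Num.sqrt (nf f x).
Set Default Proof Using "All".
Section Form.
Context {R : realType} {H : lmodType R[i]} {f : H -> H -> R[i]}.
Hypothesis fl : forall (a : R[i]) x y z, f (a *: x + y) z = a * f x z + f y z.
Hypothesis fh : forall x y, f y x = conjc (f x y).
Hypothesis fp : forall x, 0 <= f x x.

Local Notation nf := (nf f).
Local Notation Nf := (Nf f).

Lemma f0l z : f 0 z = 0.
Proof.
have := fl 1 0 0 z; rewrite scaler0 addr0 mul1r => /eqP.
by rewrite -subr_eq0 opprD addrA subrr sub0r oppr_eq0 => /eqP.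
Qed.
Lemma fDl x y z : f (x + y) z = f x z + f y z.
Proof. by rewrite -[x in LHS]scale1r fl mul1r. Qed.
Lemma fZl a x z : f (a *: x) z = a * f x z.
Proof. by rewrite -[a *: x]addr0 fl f0l addr0. Qed.
Lemma fNl x z : f (- x) z = - f x z.
Proof. by rewrite -scaleN1r fZl mulN1r. Qed.
Lemma fBl x y z : f (x - y) z = f x z - f y z.
Proof. by rewrite fDl fNl. Qed.
Lemma fDr x y z : f z (x + y) = f z x + f z y.
Proof. by rewrite [LHS]fh fDl raddfD /= [f z x]fh [f z y]fh. Qed.
Lemma fZr a x z : f z (a *: x) = conjc a * f z x.
Proof. by rewrite [LHS]fh fZl rmorphM /= [f z x]fh. Qed.
Lemma fNr x z : f z (- x) = - f z x.
Proof. by rewrite [LHS]fh fNl raddfN /= [f z x]fh. Qed.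
Lemma fBr x y z : f z (x - y) = f z x - f z y.
Proof. by rewrite fDr fNr. Qed.
Lemma f0r z : f z 0 = 0.
Proof. by rewrite [LHS]fh f0l raddf0. Qed.

Lemma f_suml (I : Type) (r : seq I) (F : I -> H) z :
  f (\sum_(i <- r) F i) z = \sum_(i <- r) f (F i) z.
Proof.
elim/big_rec2: _ => [|i y1 y2 _ Hy]; first by rewrite f0l.
by rewrite fDl Hy.
Qed.

Lemma nf_ge0 x : 0 <= nf x.
Proof. exact: (ge0_real _ (fp x)).2. Qed.
Lemma fxx_real x : f x x = (nf x)%:C.
Proof. exact: (ge0_real _ (fp x)).1. Qed.
Lemma Nf_ge0 x : 0 <= Nf x.
Proof. exact: sqrtr_ge0. Qed.
Lemma Nf_sqr x : Nf x ^+ 2 = nf x.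
Proof. by rewrite sqr_sqrtr // nf_ge0. Qed.

Lemma CS2 x y : cabs (f x y) ^+ 2 <= nf x * nf y.
Proof.
rewrite cabs_sqr.
apply: quad_disc; rewrite ?nf_ge0 ?addr_ge0 ?sqr_ge0 //.
move=> t.
set w := f x y.
have := nf_ge0 (x - ((t%:C * w) *: y))%C.
rewrite /nf fBl !fBr !fZl !fZr.
rewrite [f x x]fxx_real [f y y]fxx_real [f y x]fh -/w.
rewrite rmorphM /=.
rewrite /w; case: (f x y) => a b; move: (nf x) (nf y) => X Y.
rewrite /=. simpc. rewrite /=.
move=> Hle; apply: (le_trans Hle); rewrite le_eqVlt; apply/orP; left; apply/eqP; ring.
Qed.

Lemma CS x y : cabs (f x y) <= Nf x * Nf y.
Proof.
rewrite -(@ler_pXn2r _ 2) ?nnegrE ?cabs_ge0 ?mulr_ge0 ?Nf_ge0 //.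
by rewrite exprMn !Nf_sqr CS2.
Qed.

Lemma Re_le_N x y : complex.Re (f x y) <= Nf x * Nf y.
Proof. exact: le_trans (Re_le_cabs' _) (CS x y). Qed.

Lemma nfD x y : nf (x + y) = nf x + 2 * complex.Re (f x y) + nf y.
Proof.
rewrite /nf fDl !fDr [f y x]fh.
case: (f x x) => ? ?; case: (f y y) => ? ?; case: (f x y) => a b /=.
ring.
Qed.

Lemma Minkowski x y : Nf (x + y) <= Nf x + Nf y.
Proof.
rewrite -(@ler_pXn2r _ 2) ?nnegrE ?addr_ge0 ?Nf_ge0 //.
rewrite Nf_sqr nfD sqrrD !Nf_sqr.
have := Re_le_N x y; lra.
Qed.

Lemma Buzano a b e : nf e = 1 ->
  2 * cabs (f a e * f e b) <= Nf a * Nf b + cabs (f a b).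
Proof.
move=> He.
set beta := f b e.
set r := (2%:R * beta) *: e - b.
have Hfe : f e e = 1 by rewrite fxx_real He.
have Heb : f e b = conjc beta by rewrite /beta -fh.
have Hr : f r r = f b b.
  rewrite /r fBl !fBr !fZl !fZr Hfe Heb -/beta rmorphM rmorph_nat.
  ring.
have Hnr : Nf r = Nf b by rewrite /Nf /nf Hr.
have Har : f a r = 2%:R * (f a e * f e b) - f a b.
  by rewrite /r fBr fZr rmorphM rmorph_nat Heb; ring.
have c2 : cabs (2%:R : R[i]) = 2.
  by rewrite -[2%:R : R[i]](rmorph_nat (real_complex R)) cabs_real ger0_norm.
have := CS a r; rewrite Hnr Har.
have := cabsD (2%:R * (f a e * f e b) - f a b) (f a b).
rewrite subrK cabsM c2.
have : cabs (2%:R * (f a e * f e b) - f a b) <= cabs (2%:R * (f a e * f e b) - f a b) by [].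
have := cabsD (2%:R * (f a e * f e b)) (- f a b).
rewrite -[cabs (- f a b)]/(cabs (- f a b)).
lra.
Qed.
End Form.


Set Default Proof Using "All".

Definition selfadj {R : realType} {H : lmodType R[i]} (f : H -> H -> R[i]) (B : H -> H) :=
  forall u v, f (B u) v = f u (B v).

Section Ops.
Context {R : realType} {H : lmodType R[i]} {f : H -> H -> R[i]}.
Hypothesis fl : forall (a : R[i]) x y z, f (a *: x + y) z = a * f x z + f y z.
Hypothesis fh : forall x y, f y x = conjc (f x y).
Hypothesis fp : forall x, 0 <= f x x.

Lemma iter_selfadj B m : selfadj f B -> selfadj f (iter m B).
Proof.
move=> hB; elim: m => [//|m IH] u v /=.
by rewrite hB IH -[B (iter m B v)]/(iter m.+1 B v) iterSr.
Qed.

Lemma iter_shift B p q x y : selfadj f B ->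
  f (iter (p + q) B x) y = f (iter q B x) (iter p B y).
Proof. by move=> hB; rewrite iterD iter_selfadj. Qed.

Section Jensen.
Variable B : H -> H.
Hypothesis Blin : forall a u v, B (a *: u + v) = a *: B u + B v.
Hypothesis Bsa : selfadj f B.
Hypothesis Bpos : forall u, 0 <= f (B u) u.

Let g := fun u v => f (B u) v.
Let gl : forall (a : R[i]) x y z, g (a *: x + y) z = a * g x z + g y z.
Proof. by move=> a x y z; rewrite /g Blin fl. Qed.
Let gh : forall x y, g y x = conjc (g x y).
Proof. by move=> x y; rewrite /g Bsa fh. Qed.
Let gp : forall x, 0 <= g x x.
Proof. exact: Bpos. Qed.

Variable x : H.
Hypothesis x1 : nf f x = 1.
Let a j := complex.Re (f (iter j B x) x).

Let a_double q : a (q + q) = nf f (iter q B x).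
Proof. by rewrite /a iter_shift. Qed.
Let a_double1 q : a (q + q.+1) = nf g (iter q B x).
Proof. by rewrite /a /nf /g iter_shift // iterS -Bsa. Qed.

Let a_ge0 j : 0 <= a j.
Proof.
move: (odd_double_half j); rewrite -addnn; case: (odd j) => /= E.
  have -> : j = j./2 + (j./2).+1 by lia.
  by rewrite a_double1 nf_ge0.
have -> : j = j./2 + j./2 by lia.
by rewrite a_double nf_ge0.
Qed.

Let a0 : a 0 = 1.
Proof. exact: x1. Qed.

Let a_shift p q : a (p + q) = complex.Re (f (iter q B x) (iter p B x)).
Proof. by rewrite /a iter_shift. Qed.
Let a_shift1 p q : a (p + q.+1) = complex.Re (g (iter q B x) (iter p B x)).
Proof. by rewrite /a /g iter_shift // iterS -Bsa. Qed.

Let LC m : a m.+1 ^+ 2 <= a m * a m.+2.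
Proof.
move: (odd_double_half m); rewrite -addnn; case: (odd m) => /= E.
  have [q ->] : exists q, m = q + q.+1 by exists m./2; lia.
  rewrite (_ : (q + q.+1).+2 = q.+1 + q.+2); last by lia.
  rewrite (_ : (q + q.+1).+1 = q.+1 + q.+1); last by lia.
  rewrite !a_double1 a_shift1.
  exact: le_trans (Re_sqr_le _) (CS2 gl gh gp _ _).
have [q ->] : exists q, m = q + q by exists m./2; lia.
rewrite (_ : (q + q).+2 = q.+1 + q.+1); last by lia.
rewrite (_ : (q + q).+1 = q.+1 + q); last by lia.
rewrite !a_double a_shift.
exact: le_trans (Re_sqr_le _) (CS2 fl fh fp _ _).
Qed.

Let step m : a 1 * a m <= a m.+1.
Proof.
elim: m => [|m IH]; first by rewrite a0 mulr1.
have h1 := LC m.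
have h2 : a 1 * a m.+1 ^+ 2 <= a m.+1 * a m.+2.
  apply: le_trans (ler_wpM2l (a_ge0 1) h1) _.
  have := a_ge0 m.+2; nra.
have [z|p] := eqVneq (a m.+1) 0.
  by rewrite z mulr0 a_ge0.
have pp : 0 < a m.+1 by rewrite lt0r p a_ge0.
rewrite -(ler_pM2l pp); move: h2; rewrite expr2; nra.
Qed.

Lemma jensen m : complex.Re (f (B x) x) ^+ m <= complex.Re (f (iter m B x) x).
Proof.
have -> : complex.Re (f (B x) x) = a 1 by [].
elim: m => [|m IH]; first by rewrite expr0 -[iter 0 B x]/x -a0.
rewrite exprS; apply: le_trans (step m).
by apply: ler_wpM2l; [exact: a_ge0 | exact: IH].
Qed.

End Jensen.
End Ops.


Set Default Proof Using "All".

Lemma bernoulli_ineq {R : realType} (d : R) (N : nat) : 0 <= d -> 1 + N%:R * d <= (1 + d) ^+ N.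
Proof.
move=> d0; elim: N => [|N IH]; first by rewrite mul0r addr0 expr0.
rewrite exprS -natr1.
have h : 0 <= (1 + d) ^+ N by rewrite exprn_ge0 // addr_ge0.
have h2 : 0 <= N%:R * d by rewrite mulr_ge0 ?ler0n.
nra.
Qed.

Lemma archi_contra {R : realType} (e C : R) : 0 < e ->
  ~ (forall m : nat, m%:R * e <= C).
Proof.
move=> e0 Hm.
have C0 : 0 <= C by have := Hm 0%N; rewrite mul0r.
have := archi_boundP (divr_ge0 C0 (ltW e0)).
set b := Num.bound _ => hb.
have := Hm b.
rewrite -(ler_pdivlMr _ _ e0) => hb'.
lra.
Qed.

Section ABound.
Context {R : realType} {H : lmodType R[i]} {f : H -> H -> R[i]}.
Hypothesis fl : forall (a : R[i]) x y z, f (a *: x + y) z = a * f x z + f y z.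
Hypothesis fh : forall x y, f y x = conjc (f x y).
Hypothesis fp : forall x, 0 <= f x x.
Variables (nu : H -> R) (cA K : R) (B : H -> H).
Hypothesis nu0 : forall u, 0 <= nu u.
Hypothesis cA0 : 0 <= cA.
Hypothesis K0 : 0 <= K.
Hypothesis hA : forall u, nf f u <= cA * nu u ^+ 2.
Hypothesis hB : forall u, nu (B u) <= K * nu u.
Hypothesis Bsa : selfadj f B.

Lemma abound x : Nf f (B x) <= K * Nf f x.
Proof.
pose a j := nf f (iter j B x).
have a_ge0 j : 0 <= a j by exact: nf_ge0.
have hi j : a j ^+ 2 <= a 0 * a (j + j).
  rewrite /a /nf -(iter_shift (f:=f)) // mulrC.
  exact: le_trans (Re_sqr_le _) (CS2 fl fh fp _ _).
have hnu j : nu (iter j B x) <= K ^+ j * nu x.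
  elim: j => [|j IH]; first by rewrite expr0 mul1r.
  rewrite iterS exprS -mulrA; apply: le_trans (hB _) _.
  by apply: ler_wpM2l; [exact: K0 | exact: IH].
have hiii j : a j <= cA * (K ^+ j * nu x) ^+ 2.
  apply: le_trans (hA _) _; apply: ler_wpM2l; first exact: cA0.
  by rewrite ler_sqr ?nnegrE ?nu0 ?mulr_ge0 ?exprn_ge0 ?nu0.
have hii m : a 1 ^+ (2 ^ m)%N * a 0 <= a 0 ^+ (2 ^ m)%N * a (2 ^ m)%N.
  elim: m => [|m IH]; first by rewrite expn0 !expr1 mulrC.
  have hs : (a 1 ^+ (2 ^ m)%N * a 0) ^+ 2 <= (a 0 ^+ (2 ^ m)%N * a (2 ^ m)%N) ^+ 2.
    by rewrite ler_sqr ?nnegrE ?mulr_ge0 ?exprn_ge0 ?a_ge0.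
  have h2 := hi (2 ^ m)%N.
  rewrite expnS mul2n -addnn.
  have [z|p] := eqVneq (a 0) 0.
    by rewrite z mulr0 expr0n /= addn_eq0 expn_eq0 /= mul0r.
  have pp : 0 < a 0 by rewrite lt0r p a_ge0.
  rewrite -(ler_pM2l pp).
  move: hs; rewrite !exprMn -!exprM muln2 -addnn !exprD => hs.
  have : a 0 ^+ (2 ^ m)%N ^+ 2 * a (2 ^ m)%N ^+ 2 <= a 0 ^+ (2 ^ m)%N ^+ 2 * (a 0 * a ((2 ^ m + 2 ^ m)%N)).
    by apply: ler_wpM2l; rewrite ?exprn_ge0 ?a_ge0.
  rewrite !expr2 in hs *.
  move=> h3; nra.
have key : a 1 <= K ^+ 2 * a 0.
  have [z|p] := eqVneq (a 0) 0.
    have := hi 1%N; rewrite z mul0r => h.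
    have := a_ge0 1; nra.
  have pp : 0 < a 0 by rewrite lt0r p a_ge0.
  rewrite leNgt; apply/negP => hlt.
  set C := cA * nu x ^+ 2.
  have hC m : a 1 ^+ (2 ^ m) * a 0 <= (K ^+ 2 * a 0) ^+ (2 ^ m) * C.
    apply: le_trans (hii m) _.
    have := hiii (2 ^ m)%N.
    rewrite /C exprMn -!exprM mulnC exprM => h.
    have : a 0 ^+ (2 ^ m) * a (2 ^ m)%N <= a 0 ^+ (2 ^ m) * (cA * ((K ^+ 2) ^+ (2 ^ m) * nu x ^+ 2)).
      by apply: ler_wpM2l; rewrite ?exprn_ge0 ?a_ge0.
    move=> h'; apply: le_trans h' _; rewrite le_eqVlt; apply/orP; left; apply/eqP.
    rewrite [(K ^+ 2 * a 0) ^+ _]exprMn; move: (K ^+ 2 ^+ (2 ^ m)%N) (a 0 ^+ (2 ^ m)%N) => u v; ring.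
  have [K00|Kp] := eqVneq K 0.
    have := hC 0%N; rewrite K00 expn0 !expr1 expr0n /= mul0r mul0r => h.
    move: hlt; rewrite K00 expr0n /= mul0r => hlt; nra.
  have Lp : 0 < K ^+ 2 * a 0 by rewrite mulr_gt0 // exprn_gt0 // lt0r Kp K0.
  set L := K ^+ 2 * a 0 in hlt hC Lp.
  set r := a 1 / L.
  have ar : a 1 = r * L by rewrite /r divfK // lt0r_neq0.
  have r1 : 1 < r by rewrite /r ltr_pdivlMr // mul1r.
  apply: (@archi_contra _ ((r - 1) * a 0) C); first by rewrite mulr_gt0 // subr_gt0.
  move=> m.
  have h := hC m; rewrite ar exprMn -mulrA mulrC -mulrA ler_pM2l ?exprn_gt0 // in h.
  have r0 : 0 <= r - 1 by rewrite subr_ge0 ltW.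
  have hb := @bernoulli_ineq _ (r - 1) (2 ^ m)%N r0.
  rewrite (_ : 1 + (r - 1) = r) in hb; last by ring.
  have hm : m%:R <= (2 ^ m)%:R :> R by rewrite ler_nat ltnW // ltn_expl.
  have e0 : 0 < (r - 1) * a 0 by rewrite mulr_gt0 // subr_gt0.
  move: (r ^+ (2 ^ m)%N) hb h => u hb h.
  nra.
rewrite /Nf -[nf f (B x)]/(a 1) -[nf f x]/(a 0).
have h0 : 0 <= K ^+ 2 * a 0 by rewrite mulr_ge0 // sqr_ge0.
have := key; rewrite -ler_sqrt //; move/le_trans; apply.
by rewrite sqrtrM ?sqr_ge0 // sqrtr_sqr ger0_norm.
Qed.
End ABound.


Set Default Proof Using "All".

Lemma ReD {R : realType} (z w : R[i]) : complex.Re (z + w) = complex.Re z + complex.Re w.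
Proof. by case: z; case: w. Qed.

Section Single.
Context {R : realType} {H : lmodType R[i]} {f : H -> H -> R[i]}.
Hypothesis fl : forall (a : R[i]) x y z, f (a *: x + y) z = a * f x z + f y z.
Hypothesis fh : forall x y, f y x = conjc (f x y).
Hypothesis fp : forall x, 0 <= f x x.
Variables (S Ssh : H -> H).
Hypothesis Slin : forall a u v, S (a *: u + v) = a *: S u + S v.
Hypothesis Sshlin : forall a u v, Ssh (a *: u + v) = a *: Ssh u + Ssh v.
Hypothesis hsh : forall u v, f (Ssh u) v = f u (S v).

Let hS u v : f (S u) v = f u (Ssh v).
Proof. by rewrite [LHS]fh -hsh [RHS]fh. Qed.

Let P := Ssh \o S.
Let Q := S \o Ssh.
Let Psa : selfadj f P.
Proof. by move=> u v; rewrite /P /= hsh hS. Qed.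
Let Qsa : selfadj f Q.
Proof. by move=> u v; rewrite /Q /= hS hsh. Qed.
Let Ppos u : 0 <= f (P u) u.
Proof. by rewrite /P /= hsh. Qed.
Let Qpos u : 0 <= f (Q u) u.
Proof. by rewrite /Q /= hS. Qed.
Let Plin a u v : P (a *: u + v) = a *: P u + P v.
Proof. by rewrite /P /= Slin Sshlin. Qed.
Let Qlin a u v : Q (a *: u + v) = a *: Q u + Q v.
Proof. by rewrite /Q /= Sshlin Slin. Qed.

Variable n : nat.
Variable x : H.
Hypothesis x1 : nf f x = 1.

Let Nx1 : Nf f x = 1.
Proof. by rewrite /Nf x1 sqrtr1. Qed.

Lemma single :
  cabs (f (S x) x) ^+ (4 * n) <=
  1 / 4 * complex.Re (f (iter (2 * n) (Ssh \o S) x + iter (2 * n) (S \o Ssh) x) x)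
  + 1 / 2 * cabs (f (iter n (Ssh \o S) (iter n (S \o Ssh) x)) x).
Proof.
rewrite -/P -/Q.
set c := cabs (f (S x) x).
have c0 : 0 <= c by exact: cabs_ge0.
have h1 : c <= Nf f (S x) by have := CS fl fh fp (S x) x; rewrite Nx1 mulr1.
have h2 : c <= Nf f (Ssh x).
  have := CS fl fh fp (Ssh x) x; rewrite Nx1 mulr1.
  by rewrite /c hS fh cabsJ.
have p1E : nf f (S x) = complex.Re (f (P x) x) by rewrite /nf /P /= hsh.
have q1E : nf f (Ssh x) = complex.Re (f (Q x) x) by rewrite /nf /Q /= hS.
have h4 : c ^+ 4 <= complex.Re (f (P x) x) * complex.Re (f (Q x) x).
  rewrite -p1E -q1E -!Nf_sqr // -exprMn (_ : 4 = 2 * 2)%N // exprM.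
  rewrite ler_sqr ?nnegrE ?exprn_ge0 ?mulr_ge0 ?Nf_ge0 //.
  rewrite expr2; apply: ler_pM => //.
have pn0 := jensen fl fh fp P Plin Psa Ppos x x1 n.
have qn0 := jensen fl fh fp Q Qlin Qsa Qpos x x1 n.
have p10 : 0 <= complex.Re (f (P x) x) by rewrite -p1E nf_ge0.
have q10 : 0 <= complex.Re (f (Q x) x) by rewrite -q1E nf_ge0.
set pn := complex.Re (f (iter n P x) x) in pn0 *.
set qn := complex.Re (f (iter n Q x) x) in qn0 *.
have h5 : c ^+ (4 * n) <= pn * qn.
  have hh : c ^+ 4 ^+ n <= (complex.Re (f (P x) x) * complex.Re (f (Q x) x)) ^+ n.
    by rewrite lerXn2r // ?nnegrE ?exprn_ge0 ?mulr_ge0.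
  rewrite exprM; apply: le_trans hh _.
  rewrite exprMn; apply: ler_pM => //; exact: exprn_ge0.
have pnge0 : 0 <= pn := le_trans (exprn_ge0 _ p10) pn0.
have qnge0 : 0 <= qn := le_trans (exprn_ge0 _ q10) qn0.
have h6 : pn * qn <= cabs (f (iter n P x) x * f x (iter n Q x)).
  rewrite cabsM [f x _]fh cabsJ.
  by apply: ler_pM => //; exact: Re_le_cabs'.
have h7 := Buzano fl fh fp (iter n P x) (iter n Q x) x x1.
have amgm : Nf f (iter n P x) * Nf f (iter n Q x) <=
    (nf f (iter n P x) + nf f (iter n Q x)) / 2.
  rewrite -!Nf_sqr //; have := Nf_ge0 fl fh fp (iter n P x); have := Nf_ge0 fl fh fp (iter n Q x).
  have := sqr_ge0 (Nf f (iter n P x) - Nf f (iter n Q x)).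
  rewrite sqrrB; lra.
have eP : nf f (iter n P x) = complex.Re (f (iter (2 * n) P x) x).
  by rewrite /nf mul2n -addnn iter_shift.
have eQ : nf f (iter n Q x) = complex.Re (f (iter (2 * n) Q x) x).
  by rewrite /nf mul2n -addnn iter_shift.
have eY : cabs (f (iter n P x) (iter n Q x)) = cabs (f (iter n P (iter n Q x)) x).
  by rewrite (iter_selfadj (f := f)) // [f x _]fh cabsJ.
rewrite fDl // (ReD (f (iter (2 * n) P x) x)) -eP -eQ -eY.
lra.
Qed.
End Single.


Set Default Proof Using "All".

Lemma chebyshev {R : realType} (k : nat) (c : 'I_k -> R) (j : nat) :
  (forall i, 0 <= c i) ->
  (\sum_i c i ^+ j) * (\sum_i c i) <= k%:R * \sum_i c i ^+ j.+1.
Proof.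
move=> c0.
have D0 : 0 <= \sum_(i < k) \sum_(l < k) (c i ^+ j - c l ^+ j) * (c i - c l).
  apply: sumr_ge0 => i _; apply: sumr_ge0 => l _.
  have [h|h] := leP (c i) (c l).
    have h' : c i ^+ j <= c l ^+ j by rewrite lerXn2r // nnegrE c0.
    by rewrite mulr_le0 // subr_le0.
  have h' : c l ^+ j <= c i ^+ j by rewrite lerXn2r // ?nnegrE ?c0 // ltW.
  by rewrite mulr_ge0 // subr_ge0 // ltW.
have E : \sum_(i < k) \sum_(l < k) (c i ^+ j - c l ^+ j) * (c i - c l) =
   (k%:R * \sum_i c i ^+ j.+1) *+ 2 - ((\sum_i c i ^+ j) * (\sum_i c i)) *+ 2.
  have E1 : \sum_(i < k) \sum_(l < k) (c i ^+ j - c l ^+ j) * (c i - c l) =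
     \sum_(i < k) \sum_(l < k) (c i ^+ j.+1) + \sum_(i < k) \sum_(l < k) (c l ^+ j.+1)
     - \sum_(i < k) \sum_(l < k) (c i ^+ j * c l) - \sum_(i < k) \sum_(l < k) (c l ^+ j * c i).
    rewrite -big_split -!sumrB /=; apply: eq_bigr => i _.
    rewrite -big_split -!sumrB /=; apply: eq_bigr => l _.
    rewrite !exprS; ring.
  rewrite E1.
  have E2 : \sum_i \sum_(l < k) (c i ^+ j.+1) = k%:R * \sum_i c i ^+ j.+1.
    rewrite mulr_sumr; apply: eq_bigr => i _.
    by rewrite sumr_const card_ord mulr_natl.
  have E3 : \sum_(i < k) \sum_l (c l ^+ j.+1) = k%:R * \sum_i c i ^+ j.+1.
    by rewrite sumr_const card_ord mulr_natl.
  have E4 : \sum_(i < k) \sum_(l < k) (c i ^+ j * c l) = (\sum_i c i ^+ j) * (\sum_i c i).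
    by rewrite mulr_suml; apply: eq_bigr => i _; rewrite mulr_sumr.
  have E5 : \sum_(i < k) \sum_(l < k) (c l ^+ j * c i) = (\sum_i c i ^+ j) * (\sum_i c i).
    by rewrite exchange_big /= E4.
  rewrite E2 E3 E4 E5; rewrite !mulr2n; ring.
move: D0; rewrite E !mulr2n; lra.
Qed.

Lemma pmean {R : realType} (k : nat) (c : 'I_k -> R) (m : nat) :
  (forall i, 0 <= c i) ->
  (\sum_i c i) ^+ m.+1 <= k%:R ^+ m * \sum_i c i ^+ m.+1.
Proof.
move=> c0; elim: m => [|m IH]; first by rewrite expr0 mul1r !expr1.
rewrite exprS mulrC.
have s0 : 0 <= \sum_i c i by apply: sumr_ge0.
apply: le_trans (ler_wpM2r s0 IH) _.
rewrite -mulrA exprS (mulrC k%:R) -mulrA.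
apply: ler_wpM2l; first by rewrite exprn_ge0 ?ler0n.
exact: chebyshev.
Qed.

Section Herm.
Context {R : realType} {H : lmodType R[i]} {ip : H -> H -> R[i]}.
Hypothesis fl : forall (a : R[i]) x y z, ip (a *: x + y) z = a * ip x z + ip y z.
Hypothesis fh : forall x y, ip y x = conjc (ip x y).
Hypothesis fp : forall x, 0 <= ip x x.
Variable A : H -> H.
Hypothesis Alin : forall a u v, A (a *: u + v) = a *: A u + A v.
Hypothesis Apos : forall x, 0 <= ip (A x) x.

Lemma herm x y : ip (A y) x = conjc (ip (A x) y).
Proof.
have A0 : A 0 = 0.
  have := Alin 1 0 0; rewrite scaler0 addr0 scale1r => /eqP.
  by rewrite -subr_eq0 opprD addrA subrr sub0r oppr_eq0 => /eqP.
have AD u v : A (u + v) = A u + A v by have := Alin 1 u v; rewrite !scale1r.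
have AZ a u : A (a *: u) = a *: A u by have := Alin a u 0; rewrite !addr0 A0 addr0.
have r1 := Apos (x + y).
rewrite AD fDl // (fDr fl fh fp x y (A x)) (fDr fl fh fp x y (A y)) in r1.
have r2 := Apos (x + (Complex 0 1) *: y).
rewrite AD AZ fDl // fZl // (fDr fl fh fp x _ (A x)) (fDr fl fh fp x _ (A y)) !(fZr fl fh fp) in r2.
move: r1 r2 (Apos x) (Apos y).
case: (ip (A x) x) => a1 b1; case: (ip (A y) y) => a2 b2.
case: (ip (A x) y) => a b.
case: (ip (A y) x) => c d.
simpc. rewrite /=.
move=> /andP[/eqP e1 _] /andP[/eqP e2 _] /andP[/eqP e3 _] /andP[/eqP e4 _].
by apply/eqP; rewrite eq_complex /=; apply/andP; split; apply/eqP; lra.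
Qed.
End Herm.


Set Default Proof Using "All".

Lemma sup_ge0 {R : realType} (E : set R) : (forall y, E y -> 0 <= y) -> 0 <= sup E.
Proof.
move=> h; case: (pselect (has_sup E)) => hs; last by rewrite sup_out.
have [[e Ee] _] := hs.
exact: le_trans (h e Ee) (sup_upper_bound hs Ee).
Qed.

Lemma powdiff {R : realType} (y s : R) (m : nat) : 0 <= y -> y <= s ->
  s ^+ m.+1 - y ^+ m.+1 <= m.+1%:R * (s - y) * s ^+ m.
Proof.
move=> y0 ys; elim: m => [|m IH]; first by rewrite !expr1 expr0 mul1r mulr1.
have hy : y ^+ m.+1 <= s ^+ m.+1 by rewrite lerXn2r // nnegrE (le_trans y0 ys).
have hs0 : 0 <= s ^+ m by rewrite exprn_ge0 // (le_trans y0 ys).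
have e1 : s ^+ m.+2 - y ^+ m.+2 = s * (s ^+ m.+1 - y ^+ m.+1) + y ^+ m.+1 * (s - y).
  by rewrite !exprS; ring.
rewrite e1 -(natr1 (R:=R) m.+1).
have s0 : 0 <= s := le_trans y0 ys.
have sy : 0 <= s - y by rewrite subr_ge0.
have h1 : s * (s ^+ m.+1 - y ^+ m.+1) <= s * (m.+1%:R * (s - y) * s ^+ m).
  by apply: ler_wpM2l.
have h2 : y ^+ m.+1 * (s - y) <= s ^+ m.+1 * (s - y).
  by apply: ler_wpM2r.
move: h1 h2; rewrite (exprS s m).
move: (s ^+ m) (y ^+ m.+1) (m.+1%:R : R) => a b c h1 h2.
nra.
Qed.

Lemma sup_pow_le {R : realType} (E : set R) (m : nat) (M : R) : 0 <= M ->
  (forall y, E y -> 0 <= y /\ y ^+ m.+1 <= M) -> sup E ^+ m.+1 <= M.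
Proof.
move=> M0 h; case: (pselect (has_sup E)) => hs; last by rewrite sup_out // expr0n.
have [[e Ee] _] := hs.
set s := sup E.
have s0 : 0 <= s := le_trans (h e Ee).1 (sup_upper_bound hs Ee).
rewrite leNgt; apply/negP => hlt.
have sp : 0 < s.
  rewrite lt0r s0 andbT; apply/eqP => s00; move: hlt; rewrite s00 expr0n /=; lra.
have sm : 0 < s ^+ m by rewrite exprn_gt0.
set eps := (s ^+ m.+1 - M) / (2 * m.+1%:R * s ^+ m).
have den : 0 < 2 * m.+1%:R * s ^+ m by rewrite !mulr_gt0 // ltr0n.
have eps0 : 0 < eps by rewrite divr_gt0 // subr_gt0.
have [y Ey hy] := sup_adherent eps0 hs.
have [y0 yM] := h y Ey.
have ys : y <= s := sup_upper_bound hs Ey.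
have hd := @powdiff _ y s m y0 ys.
have hlt2 : (s - y) * (2 * m.+1%:R * s ^+ m) < s ^+ m.+1 - M.
  have : s - y < eps by move: hy; rewrite -/s; lra.
  by rewrite -(ltr_pM2r den) /eps divfK // gt_eqF.
have e2 : (s - y) * (2 * m.+1%:R * s ^+ m) = 2 * (m.+1%:R * (s - y) * s ^+ m) by ring.
rewrite e2 in hlt2; move: hd hlt yM hlt2; move: (m.+1%:R * (s - y) * s ^+ m) (s ^+ m.+1) (y ^+ m.+1) => a b c.
lra.
Qed.

Lemma Minkowski_sum {R : realType} {H : lmodType R[i]} {f : H -> H -> R[i]}
  (fl : forall (a : R[i]) x y z, f (a *: x + y) z = a * f x z + f y z)
  (fh : forall x y, f y x = conjc (f x y))
  (fp : forall x, 0 <= f x x)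
  (I : Type) (r : seq I) (F : I -> H) :
  Nf f (\sum_(i <- r) F i) <= \sum_(i <- r) Nf f (F i).
Proof.
elim/big_rec2: _ => [|i y1 y2 _ Hy].
  by rewrite /Nf /nf f0l // sqrtr0.
exact: le_trans (Minkowski fl fh fp _ _) (lerD (lexx _) Hy).
Qed.

Lemma ReSum {R : realType} (I : Type) (r : seq I) (F : I -> R[i]) :
  complex.Re (\sum_(i <- r) F i) = \sum_(i <- r) complex.Re (F i).
Proof.
elim/big_rec2: _ => [//|i y1 y2 _ Hy]; by rewrite ReD Hy.
Qed.


Local Close Scope complex_scope.
Theorem theorem3p10 (R : realType) (H : lmodType R[i]) (ip : H -> H -> R[i])
  (Hip : inner_product_axioms ip) (Hcompl : hcomplete ip)
  (A : H -> H) (HA : positive_op ip A) (HA0 : exists x : H, A x != 0)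
  (k : nat) (Hk : (1 <= k)%N)
  (S Ssh : 'I_k -> H -> H)
  (HS : forall i : 'I_k, in_BA ip A (S i))
  (HSsh : forall i : 'I_k, is_sharpA ip A (S i) (Ssh i))
  (n : nat) (Hn : (0 < n)%N) :
  omegaA ip A (fun x => \sum_(i < k) S i x) ^+ (4 * n)
  <= (k%:R ^+ (4 * n - 1) / 4) *
     (opnormA ip A (fun x => \sum_(i < k)
          (iter (2 * n) (Ssh i \o S i) x + iter (2 * n) (S i \o Ssh i) x))
      + 2 * \sum_(i < k)
          omegaA ip A (fun x => iter n (Ssh i \o S i) (iter n (S i \o Ssh i) x))).
Proof.
case: Hip => ipl iph ipp _.
have [[Alin _] Apos] := HA.
pose f := ipA ip A.
have fl : forall (a : R[i]) x y z, f (a *: x + y) z = a * f x z + f y z.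
  by move=> a x y z; rewrite /f /ipA Alin ipl.
have fh : forall x y, f y x = conjc (f x y) := herm ipl iph ipp A Alin Apos.
have fp : forall x, 0 <= f x x := Apos.
have bnd : forall T, bounded_op ip T ->
    exists c, 0 <= c /\ forall x, hnorm ip (T x) <= c * hnorm ip x.
  move=> T [_ [c hc]]; exists (Num.max c 0); split; first by rewrite le_max lexx orbT.
  move=> x; apply: le_trans (hc x) _; apply: ler_wpM2r; first exact: sqrtr_ge0.
  by rewrite le_max lexx.
have [cA [cA0 hcA]] := bnd A HA.1.
have nu0 : forall u, 0 <= hnorm ip u by move=> u; exact: sqrtr_ge0.
have hA : forall u, nf f u <= cA * hnorm ip u ^+ 2.
  move=> u; apply: le_trans (Re_le_N ipl iph ipp (A u) u) _.
  rewrite expr2 mulrA; apply: ler_wpM2r; [exact: nu0 | exact: hcA].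
have Slin i : forall a u v, S i (a *: u + v) = a *: S i u + S i v.
  by move=> a u v; case: (HS i) => [[lin _] _]; exact: lin.
have Sshlin i : forall a u v, Ssh i (a *: u + v) = a *: Ssh i u + Ssh i v.
  by move=> a u v; case: (HSsh i) => [[lin _] _ _]; exact: lin.
have hsh i : forall u v, f (Ssh i u) v = f u (S i v).
  by move=> u v; case: (HSsh i) => _ h _; exact: h.
have hS i : forall u v, f (S i u) v = f u (Ssh i v).
  by move=> u v; rewrite [LHS]fh -hsh [RHS]fh.
have Psa i : selfadj f (Ssh i \o S i) by move=> u v; rewrite /= hsh hS.
have Qsa i : selfadj f (S i \o Ssh i) by move=> u v; rewrite /= hS hsh.
have KK : forall i, exists KK : R * R,
    (0 <= KK.1 /\ forall x, Nf f ((Ssh i \o S i) x) <= KK.1 * Nf f x) /\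
    (0 <= KK.2 /\ forall x, Nf f ((S i \o Ssh i) x) <= KK.2 * Nf f x).
  move=> i.
  have [cS [cS0 hcS]] := bnd _ (HS i).1.
  have [cT [cT0 hcT]] : exists c, 0 <= c /\ forall x, hnorm ip (Ssh i x) <= c * hnorm ip x.
    by apply: bnd; case: (HSsh i).
  exists (cT * cS, cS * cT); split; split; rewrite /= ?mulr_ge0 //.
    move=> x; apply: (abound fl fh fp (hnorm ip) cA (cT * cS) (Ssh i \o S i) nu0 cA0 _ hA _ (Psa i) x).
      by rewrite mulr_ge0.
    move=> u /=; apply: le_trans (hcT _) _; rewrite -mulrA; apply: ler_wpM2l => //.
  move=> x; apply: (abound fl fh fp (hnorm ip) cA (cS * cT) (S i \o Ssh i) nu0 cA0 _ hA _ (Qsa i) x).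
    by rewrite mulr_ge0.
  move=> u /=; apply: le_trans (hcS _) _; rewrite -mulrA; apply: ler_wpM2l => //.
have [Kf hKf] := choice KK.
have iterb : forall B K, 0 <= K -> (forall x, Nf f (B x) <= K * Nf f x) ->
    forall m x, Nf f (iter m B x) <= K ^+ m * Nf f x.
  move=> B K K0 hB; elim=> [|m IH] x; first by rewrite expr0 mul1r.
  rewrite iterS exprS -mulrA; apply: le_trans (hB _) _; apply: ler_wpM2l => //.
have unitN : forall x, normA ip A x = 1 -> Nf f x = 1 by [].
have unit_nf : forall x, normA ip A x = 1 -> nf f x = 1.
  by move=> x hx; rewrite -(Nf_sqr fl fh fp) unitN // expr1n.
pose KP i := (Kf i).1.
pose KQ i := (Kf i).2.
have KP0 i : 0 <= KP i by case: (hKf i) => [[]].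
have KQ0 i : 0 <= KQ i by case: (hKf i) => _ [].
have hKP i x : Nf f ((Ssh i \o S i) x) <= KP i * Nf f x by case: (hKf i) => [[_ h] _]; exact: h.
have hKQ i x : Nf f ((S i \o Ssh i) x) <= KQ i * Nf f x by case: (hKf i) => _ [_ h]; exact: h.
pose U := [set x : H | normA ip A x = 1]%classic.
pose Z := fun x => \sum_(i < k)
          (iter (2 * n) (Ssh i \o S i) x + iter (2 * n) (S i \o Ssh i) x).
pose Y := fun i x => iter n (Ssh i \o S i) (iter n (S i \o Ssh i) x).
have ub1 : has_ubound [set normA ip A (Z x) | x in U]%classic.
  exists (\sum_(i < k) (KP i ^+ (2 * n) + KQ i ^+ (2 * n))) => _ [x Ux <-].
  rewrite /Z -[normA ip A _]/(Nf f _).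
  apply: le_trans (Minkowski_sum fl fh fp _ _ _) _.
  apply: ler_sum => i _.
  apply: le_trans (Minkowski fl fh fp _ _) _.
  apply: lerD.
    by apply: le_trans (iterb _ _ (KP0 i) (hKP i) _ _) _; rewrite unitN // mulr1.
  by apply: le_trans (iterb _ _ (KQ0 i) (hKQ i) _ _) _; rewrite unitN // mulr1.
have ub2 : forall i, has_ubound [set cabs (ipA ip A (Y i x) x) | x in U]%classic.
  move=> i; exists (KQ i ^+ n * KP i ^+ n) => _ [x Ux <-].
  rewrite /Y -/f (iter_selfadj fl fh fp _ n (Psa i)).
  apply: le_trans (CS fl fh fp _ _) _.
  apply: ler_pM; rewrite ?Nf_ge0 //.
    by apply: le_trans (iterb _ _ (KQ0 i) (hKQ i) _ _) _; rewrite unitN // mulr1.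
  by apply: le_trans (iterb _ _ (KP0 i) (hKP i) _ _) _; rewrite unitN // mulr1.
have M0 : 0 <= (k%:R ^+ (4 * n - 1) / 4) *
    (opnormA ip A Z + 2 * \sum_(i < k) omegaA ip A (Y i)).
  apply: mulr_ge0; first by rewrite divr_ge0 ?exprn_ge0 ?ler0n.
  apply: addr_ge0; first by apply: sup_ge0 => _ [x _ <-]; exact: sqrtr_ge0.
  apply: mulr_ge0 => //; apply: sumr_ge0 => i _; apply: sup_ge0 => _ [x _ <-]; exact: cabs_ge0.
have e : (4 * n = (4 * n - 1).+1)%N by lia.
rewrite [in X in X <= _]e.
apply: sup_pow_le; first exact: M0.
move=> _ [x Ux <-]; split; first exact: cabs_ge0.
rewrite -e.
have x1 := unit_nf x Ux.
pose c i := cabs (f (S i x) x).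
have c0 i : 0 <= c i by exact: cabs_ge0.
have h1 : cabs (f (\sum_(i < k) S i x) x) <= \sum_i c i.
  by rewrite (f_suml fl fh fp); exact: cabs_sum.
have h2 : cabs (f (\sum_(i < k) S i x) x) ^+ (4 * n) <= (\sum_i c i) ^+ (4 * n).
  by rewrite lerXn2r // ?nnegrE ?cabs_ge0 ?sumr_ge0.
have h3 := pmean k c (4 * n - 1) c0.
rewrite -e in h3.
have h4 : \sum_i c i ^+ (4 * n) <= \sum_(i < k) (1 / 4 * complex.Re (f (iter (2 * n) (Ssh i \o S i) x + iter (2 * n) (S i \o Ssh i) x) x)
  + 1 / 2 * cabs (f (Y i x) x)).
  by apply: ler_sum => i _; exact: (single fl fh fp (S i) (Ssh i) (Slin i) (Sshlin i) (hsh i) n x x1).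
have h5 : \sum_(i < k) (1 / 4 * complex.Re (f (iter (2 * n) (Ssh i \o S i) x + iter (2 * n) (S i \o Ssh i) x) x)
  + 1 / 2 * cabs (f (Y i x) x)) = 1 / 4 * complex.Re (f (Z x) x) + 1 / 2 * \sum_(i < k) cabs (f (Y i x) x).
  by rewrite big_split /= -!mulr_sumr /Z (f_suml fl fh fp) ReSum.
have h6 : complex.Re (f (Z x) x) <= opnormA ip A Z.
  apply: le_trans (Re_le_N fl fh fp _ _) _; rewrite (unitN x Ux) mulr1.
  have := ub_le_sup ub1; move=> /(_ (normA ip A (Z x))); apply; by exists x.
have h7 : \sum_(i < k) cabs (f (Y i x) x) <= \sum_(i < k) omegaA ip A (Y i).
  apply: ler_sum => i _; have := ub_le_sup (ub2 i).
  by move=> /(_ (cabs (ipA ip A (Y i x) x))); apply; exists x.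
have h8 : \sum_i c i ^+ (4 * n) <= 1 / 4 * opnormA ip A Z + 1 / 2 * \sum_(i < k) omegaA ip A (Y i).
  by move: h4; rewrite h5 => h4; lra.
have kk : 0 <= k%:R ^+ (4 * n - 1) :> R by rewrite exprn_ge0 ?ler0n.
apply: le_trans h2 _; apply: le_trans h3 _.
apply: le_trans (ler_wpM2l kk h8) _.
rewrite le_eqVlt; apply/orP; left; apply/eqP.
move: (k%:R ^+ (4 * n - 1) : R) => K.
by rewrite /Z /Y /=; field.
Qed.
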